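(* Let $n\ge 9$ be an integer and $n_0=\min\{k\in\mathbb{N}: n\le\tfrac12(k^3-k^2)\}$. Then $$\chi_{L_2}(C_n)=\begin{cases} n_0 & n\ne \tfrac12(n_0^3-n_0^2)-1,\\ n_0+1 & n=\tfrac12(n_0^3-n_0^2)-1.\end{cases}$$
   Context: All graphs are finite and simple; $C_n$ is the cycle on $n$ vertices. A proper $k$-coloring of $G$ is a map $f$ from $V(G)$ onto $[k]=\{1,\dots,k\}$ with adjacent vertices receiving different colors; $f(S)=\{f(u):u\in S\}$ and $N_G(u)$ is the neighborhood of $u$. A proper $k$-coloring $f$ is a neighbor locating coloring if for any two distinct vertices $u,v$ with $f(u)=f(v)$ we have $f(N_G(u))\ne f(N_G(v))$; $\chi_{L_2}(G)$ is the minimum number of colors in a neighbor locating coloring of $G$. *)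

(* Defs.v *)
From mathcomp Require Import all_boot.
Set Implicit Arguments. Unset Strict Implicit. Unset Printing Implicit Defensive.

(* A finite simple graph: vertex finType T with symmetric irreflexive adjacency e. *)

Definition nbhd (T : finType) (e : rel T) (u : T) : {set T} := [set v | e u v].

(* A proper k-coloring: a map ONTO the k colors (colors are 'I_k, i.e. 0..k-1,
   a relabeling of [k] = {1..k}), adjacent vertices get different colors. *)
Definition proper_coloring (T : finType) (e : rel T) (k : nat) (f : T -> 'I_k) : Prop :=
  (forall c : 'I_k, exists u : T, f u = c) /\
  (forall u v : T, e u v -> f u <> f v).

Definition neighbor_locating (T : finType) (e : rel T) (k : nat) (f : T -> 'I_k) : Prop :=
  proper_coloring e f /\
  (forall u v : T, u <> v -> f u = f v -> f @: nbhd e u <> f @: nbhd e v).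

Definition has_NLC (T : finType) (e : rel T) (k : nat) : Prop :=
  exists f : T -> 'I_k, neighbor_locating e f.

Definition is_chiL2 (T : finType) (e : rel T) (k : nat) : Prop :=
  has_NLC e k /\ forall k', has_NLC e k' -> k <= k'.

Definition cycle_rel (n : nat) : rel 'I_n :=
  fun i j => (j == (i.+1 %% n) :> nat) || (i == (j.+1 %% n) :> nat).
Arguments cycle_rel n : clear implicits.

(* Main.v *)
Require Import Defs.
From mathcomp Require Import all_boot.
From mathcomp Require Import zify.
Set Implicit Arguments. Unset Strict Implicit. Unset Printing Implicit Defensive.

Definition trp := (nat * nat * nat)%type.

Fixpoint tr (p : nat) (s : seq nat) (q : nat) : seq trp :=
  match s with
  | [::] => [::]
  | x :: s' => (p, x, head q s') :: tr x s' q
  end.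

Definition trip (s : seq nat) := tr (last 0 s) s (head 0 s).

Lemma size_tr p s q : size (tr p s q) = size s.
Proof. by elim: s p => //= x s IH p; rewrite IH. Qed.

Lemma tr_cat p s1 s2 q : s1 != [::] -> s2 != [::] ->
  tr p (s1 ++ s2) q = tr p s1 (head q s2) ++ tr (last p s1) s2 q.
Proof.
move=> _ ns2; elim: s1 p => [|x s1 IH] p //=.
case: s1 IH => [|y s1] IH /=; first by [].
by move: (IH x) => /= ->.
Qed.

Lemma tr_rcons p s y q : tr p (rcons s y) q = tr p s y ++ [:: (last p s, y, q)].
Proof.
elim: s p => //= x s IH p; by rewrite IH; case: s IH.
Qed.

Lemma trip_rot1 x s : trip (rcons s x) = rot 1 (trip (x :: s)).
Proof.
rewrite /trip /= last_rcons tr_rcons rot1_cons.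
have -> : head 0 (rcons s x) = head x s by case: s.
by rewrite cats1.
Qed.

Lemma trip_rot1' s : trip (rot 1 s) = rot 1 (trip s).
Proof. case: s => [|x s] //; by rewrite rot1_cons trip_rot1. Qed.

Lemma size_trip s : size (trip s) = size s.
Proof. by rewrite /trip size_tr. Qed.

Lemma trip_rot i s : i <= size s -> trip (rot i s) = rot i (trip s).
Proof.
elim: i => [|i IH] Hi; first by rewrite !rot0.
have H1 : i <= size s by apply: ltnW.
have -> : rot i.+1 s = rot 1 (rot i s).
  rewrite (rot_add_mod (n:=i) (m:=1)) //; last by case: (size s) Hi.
  by rewrite add1n Hi.
rewrite trip_rot1' IH //.
rewrite (rot_add_mod (n:=i) (m:=1)) ?size_trip //; last by case: (size s) Hi.
by rewrite add1n Hi.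
Qed.

Lemma trip_find t s : t \in trip s -> 2 <= size s ->
  exists R, perm_eq (trip (t.1.2 :: t.2 :: R)) (trip s) /\ size R = (size s).-2.
Proof.
move=> Ht Hs.
have Hi : index t (trip s) <= size s.
  by rewrite -size_trip ltnW // index_mem.
have E := rot_index Ht.
have Hp : perm_eq (trip (rot (index t (trip s)) s)) (trip s).
  by rewrite trip_rot // perm_rot.
have Hs' : trip (rot (index t (trip s)) s) = t :: (drop (index t (trip s)).+1 (trip s) ++ take (index t (trip s)) (trip s)).
  by rewrite trip_rot.
have sz : size (rot (index t (trip s)) s) = size s by rewrite size_rot.
move: Hs' sz Hp; case: (rot (index t (trip s)) s) => [|x [|y R]] /=.
- by move=> _ sz; rewrite -sz in Hs.
- by move=> _ sz; rewrite -sz in Hs.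
move=> Hs' sz Hp; exists R; split; last by rewrite -sz.
rewrite /trip /= in Hs'. case: Hs' => Et _.
by rewrite -Et.
Qed.

Lemma permXY (T : eqType) (X Y : seq T) e : perm_eq (X ++ e :: Y) (Y ++ e :: X).
Proof.
by rewrite -cat1s perm_catCA perm_sym -cat1s perm_catCA /= perm_cons perm_catC.
Qed.

Lemma trip_splice b c Q R :
  perm_eq (trip (b :: c :: Q ++ b :: c :: R)) (trip (b :: c :: R) ++ trip (b :: c :: Q)).
Proof.
rewrite /trip.
have -> : b :: c :: Q ++ b :: c :: R = (b :: c :: Q) ++ (b :: c :: R) by [].
rewrite tr_cat //= last_cat /=.
rewrite perm_cons /=.
exact: (permXY ((b,c,head b Q) :: tr c Q b) ((b,c,head b R) :: tr c R b) (last c Q,b,c)).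
Qed.

Definition realizable (T : seq trp) :=
  exists s, 2 <= size s /\ perm_eq (trip s) T.

Definition hasE (T : seq trp) b c := has (fun t => (t.1.2 == b) && (t.2 == c)) T.

Lemma splice T b c Q L : realizable T -> hasE T b c ->
  perm_eq L (trip (b :: c :: Q)) -> realizable (T ++ L).
Proof.
move=> [s [Hs HT]] /hasP [t Ht /andP [/eqP Eb /eqP Ec]] HL.
rewrite -(perm_mem HT) in Ht.
have [R [HR _]] := trip_find Ht Hs.
rewrite Eb Ec in HR.
exists (b :: c :: Q ++ b :: c :: R); split => //.
apply: (perm_trans (trip_splice _ _ _ _)).
by apply: perm_cat; [exact: perm_trans HR HT | rewrite perm_sym].
Qed.

Fixpoint tri k := if k is k'.+1 then tri k' + k' else 0.

Lemma tri2 k : 2 * tri k = k * k.-1.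
Proof. elim: k => //= k IH; rewrite mulnDr IH; case: k {IH} => //= k; lia. Qed.

Fixpoint pairs z : seq (nat * nat) :=
  if z is z'.+1 then pairs z' ++ [seq (b, z') | b <- iota 0 z'] else [::].

Lemma size_pairs z : size (pairs z) = tri z.
Proof. by elim: z => //= z IH; rewrite size_cat IH size_map size_iota. Qed.

Lemma mem_pairs z p : (p \in pairs z) = (p.1 < p.2 < z).
Proof.
case: p => a b /=.
elim: z => [|z IH] /=; first by rewrite in_nil; lia.
rewrite mem_cat IH.
apply/idP/idP.
- case/orP => [|/mapP [x]]; first by lia.
  by rewrite mem_iota => ? [-> ->]; lia.
move=> H; case: (ltnP b z) => Hb; first by apply/orP; left; lia.
apply/orP; right; apply/mapP; exists a; last by congr pair; lia.
by rewrite mem_iota; lia.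
Qed.

Lemma uniq_pairs z : uniq (pairs z).
Proof.
elim: z => //= z IH; rewrite cat_uniq IH /=.
rewrite map_inj_uniq ?iota_uniq ?andbT; last by move=> x y [].
apply/hasP => -[p /mapP [x _ ->]]; rewrite mem_pairs /=; lia.
Qed.

Lemma pairs_prefix w z : w <= z -> exists rest, pairs z = pairs w ++ rest.
Proof.
elim: z => [|z IH] Hw; first by case: w Hw => // _; exists [::].
case: (ltnP w z.+1) => Hw'.
  have [r Hr] := IH Hw'; exists (r ++ [seq (b, z) | b <- iota 0 z]).
  by rewrite /= Hr catA.
have -> : w = z.+1 by lia.
by exists [::]; rewrite cats0.
Qed.

Lemma pair0_in z b t : 0 < b -> b < z -> tri b < t -> (0, b) \in take t (pairs z).
Proof.
move=> Hb0 Hb Ht.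
have [r Hr] := pairs_prefix Hb.
rewrite Hr /= -catA take_cat size_pairs ltnNge (ltnW Ht) /=.
rewrite mem_cat; apply/orP; right.
have -> : t - tri b = (t - tri b).-1.+1 by lia.
case: b {Hb Ht Hr} Hb0 => [|b] //= _; by rewrite in_cons eqxx.
Qed.

Definition st (t : trp) : trp := (t.1.2, minn t.1.1 t.2, maxn t.1.1 t.2).
Definition mid (t : trp) := t.1.2.
Definition vtrip k (t : trp) :=
  [&& t.1.1 != t.1.2, t.1.2 != t.2, t.1.1 < k, t.1.2 < k & t.2 < k].
Definition goodT k (T : seq trp) :=
  [&& uniq (map st T), all (vtrip k) T & all (fun c => c \in map mid T) (iota 0 k)].

Definition LT z t := flatten [seq trip [:: p.2; p.1; z] | p <- take t (pairs z)].
Definition dl z b : seq trp := [:: (b, z, b); (z, b, z)].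
Definition LD z d := flatten [seq dl z b | b <- iota 0 d].
Definition Level z t d := LT z t ++ LD z d.

Lemma trip3 c b z : trip [:: c; b; z] = [:: (z, c, b); (c, b, z); (b, z, c)].
Proof. by []. Qed.

Lemma stT b c z : b < c < z -> map st (trip [:: c; b; z]) = [:: (c, b, z); (b, c, z); (z, b, c)].
Proof.
move=> H; rewrite trip3 /= /st /=.
have -> : minn z b = b by lia.
have -> : maxn z b = z by lia.
have -> : minn c z = c by lia.
have -> : maxn c z = z by lia.
have -> : minn b c = b by lia.
by have -> : maxn b c = c by lia.
Qed.

Lemma stD b z : b < z -> map st (dl z b) = [:: (z, b, b); (b, z, z)].
Proof.
move=> H; rewrite /= /st /=.
rewrite minnn maxnn.
have -> : minn z z = z by lia.
by have -> : maxn z z = z by lia.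
Qed.

Lemma uniq_flatten_map (A B : eqType) (f : A -> seq B) xs :
  uniq xs -> {in xs, forall x, uniq (f x)} ->
  (forall x y s, x \in xs -> y \in xs -> s \in f x -> s \in f y -> x = y) ->
  uniq (flatten (map f xs)).
Proof.
elim: xs => //= x xs IH /andP [Hx Hxs] Hu Hd.
rewrite cat_uniq Hu ?mem_head //= IH //; last first.
- by move=> y z s Hy Hz; apply: Hd; rewrite in_cons ?Hy ?Hz orbT.
- by move=> y Hy; apply: Hu; rewrite in_cons Hy orbT.
rewrite andbT; apply/hasP => -[s /flattenP [l /mapP [y Hy ->]] Hs1 Hs2].
have E : x = y by apply: (Hd x y s); rewrite ?in_cons ?eqxx ?Hy ?orbT.
by move: Hx; rewrite E Hy.
Qed.

Lemma memLT z t s : s \in map st (LT z t) ->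
  exists b c, [/\ b < c < z & [\/ s = (c, b, z), s = (b, c, z) | s = (z, b, c)]].
Proof.
rewrite /LT map_flatten -map_comp => /flattenP [l /mapP [p Hp ->]] /=.
have Hp' := mem_take Hp; rewrite mem_pairs in Hp'.
move: (stT Hp') => /= ->; rewrite !inE => H.
exists p.1, p.2; split => //.
by case/or3P: H => /eqP ->; [constructor 1|constructor 2|constructor 3].
Qed.

Lemma memLD z d s : d <= z -> s \in map st (LD z d) ->
  exists b, b < z /\ (s = (z, b, b) \/ s = (b, z, z)).
Proof.
move=> Hd; rewrite /LD map_flatten -map_comp => /flattenP [l /mapP [b Hb ->]] /=.
rewrite mem_iota in Hb.
have Hbz : b < z by lia.
move: (stD Hbz) => /= ->; rewrite !inE => H; exists b; split; first by lia.
by case/orP: H => /eqP ->; [left|right].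
Qed.

Lemma uniq_LT z t : uniq (map st (LT z t)).
Proof.
rewrite /LT map_flatten -map_comp.
have -> : map (map st \o (fun p : nat * nat => trip [:: p.2; p.1; z])) (take t (pairs z))
   = map (fun p => [:: (p.2, p.1, z); (p.1, p.2, z); (z, p.1, p.2)]) (take t (pairs z)).
  apply/eq_in_map => p /mem_take; rewrite mem_pairs => H.
  by rewrite /= -(stT H).
apply: uniq_flatten_map; first by rewrite take_uniq // uniq_pairs.
- move=> [a b] /mem_take; rewrite mem_pairs /= => H.
  rewrite /= !inE !xpair_eqE; lia.
move=> p q s /mem_take Hp /mem_take Hq.
rewrite mem_pairs in Hp; rewrite mem_pairs in Hq.
rewrite !inE.
case: p Hp => a b /= Hp; case: q Hq => a' b' /= Hq.
move=> /or3P [] /eqP -> /or3P []; rewrite !xpair_eqE => H; apply/eqP; rewrite xpair_eqE; lia.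
Qed.

Lemma uniq_LD z d : d <= z -> uniq (map st (LD z d)).
Proof.
move=> Hd; rewrite /LD map_flatten -map_comp.
have -> : map (map st \o dl z) (iota 0 d) = map (fun b => [:: (z, b, b); (b, z, z)]) (iota 0 d).
  apply/eq_in_map => b; rewrite mem_iota => H.
  have Hb : b < z by lia.
  by rewrite /= -(stD Hb).
apply: uniq_flatten_map; first by rewrite iota_uniq.
- move=> b; rewrite mem_iota => H.
  rewrite /= !inE !xpair_eqE; lia.
move=> b b' s; rewrite !mem_iota => Hb Hb'.
rewrite !inE => /orP [] /eqP -> /orP []; rewrite !xpair_eqE => H; apply/eqP; lia.
Qed.

Lemma uniq_Level z t d : d <= z -> uniq (map st (Level z t d)).
Proof.
move=> Hd; rewrite /Level map_cat cat_uniq uniq_LT uniq_LD // andbT /=.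
apply/hasP => -[s /(memLD Hd) [b [Hb Hs]] /memLT [b' [c [Hc Hs']]]].
case: Hs => E; rewrite E in Hs'; case: Hs' => /eqP; rewrite !xpair_eqE; lia.
Qed.

Lemma memL_trip z t d x : d <= z -> x \in Level z t d ->
  exists b c, (b < c < z /\ x \in trip [:: c; b; z]) \/ (c = b /\ b < z /\ x \in dl z b).
Proof.
move=> Hd; rewrite /Level mem_cat => /orP [].
- rewrite /LT => /flattenP [l /mapP [p /mem_take Hp ->]] Hx.
  rewrite mem_pairs in Hp.
  by exists p.1, p.2; left.
- rewrite /LD => /flattenP [l /mapP [b Hb ->]] Hx.
  rewrite mem_iota in Hb.
  exists b, b; right; split => //; split => //; lia.
Qed.

Lemma level_good z t d B : 2 <= z -> goodT z B -> t <= tri z -> d <= z -> 0 < t + d ->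
  goodT z.+1 (B ++ Level z t d).
Proof.
move=> Hz /and3P [HuB HvB HcB] Ht Hd Htd.
apply/and3P; split.
- rewrite map_cat cat_uniq HuB uniq_Level // andbT.
  apply/hasP => -[s Hs /mapP [x Hx Es]].
  have Hv := allP HvB x Hx; move: Hv; rewrite /vtrip => Hv.
  rewrite /Level map_cat mem_cat in Hs.
  case/orP: Hs => [/memLT [b [c [Hbc Hs']]] | /(memLD Hd) [b [Hb Hs']]].
  + rewrite Es /st in Hs'; case: Hs' => /eqP; rewrite !xpair_eqE; lia.
  + rewrite Es /st in Hs'; case: Hs' => /eqP; rewrite !xpair_eqE; lia.
- rewrite all_cat; apply/andP; split.
  + by apply: sub_all HvB => x; rewrite /vtrip; lia.
  apply/allP => x /(memL_trip Hd) [b [c [[Hbc Hx]|[E [Hb Hx]]]]].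
  + move: Hx; rewrite trip3 !inE => /or3P [] /eqP -> ; rewrite /vtrip /=; lia.
  + move: Hx; rewrite !inE => /orP [] /eqP -> ; rewrite /vtrip /=; lia.
- rewrite -addn1 iotaD all_cat; apply/andP; split.
  + apply: sub_all HcB => c; rewrite map_cat mem_cat => ->; done.
  rewrite /= andbT add0n map_cat mem_cat; apply/orP; right.
  rewrite /Level map_cat mem_cat.
  case: (posnP t) => Ht0.
  + have Hd0 : 0 < d by lia.
    apply/orP; right; rewrite /LD.
    have -> : d = d.-1.+1 by lia.
    by rewrite /= in_cons /mid /= eqxx.
  apply/orP; left; apply/mapP; exists (0, z, 1) => //.
  rewrite /LT; apply/flattenP; exists (trip [:: 1; 0; z]); last by rewrite trip3 !inE eqxx !orbT.
  apply/mapP; exists (0, 1) => //.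
  by apply: (pair0_in (t:=t)) => //.
Qed.

Lemma flatten_cons' (T : Type) (x : seq T) l : flatten (x :: l) = x ++ flatten l.
Proof. by []. Qed.

Lemma hasE_cat B C a b : hasE B a b -> hasE (B ++ C) a b.
Proof. by rewrite /hasE has_cat => ->. Qed.

Lemma hasE_catr B C a b : hasE C a b -> hasE (B ++ C) a b.
Proof. by rewrite /hasE has_cat => ->; rewrite orbT. Qed.

Lemma real_LT z B xs : realizable B -> (forall p, p \in xs -> hasE B p.2 p.1) ->
  realizable (B ++ flatten [seq trip [:: p.2; p.1; z] | p <- xs]).
Proof.
elim: xs B => [|p xs IH] B HB He; first by rewrite /= cats0.
rewrite map_cons flatten_cons' catA; apply: IH.
- by apply: (splice (Q := [:: z])) => //; apply: He; rewrite mem_head.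
- by move=> q Hq; apply: hasE_cat; apply: He; rewrite in_cons Hq orbT.
Qed.

Lemma real_LD z B xs : realizable B -> (forall b, b \in xs -> hasE B z b || hasE B b z) ->
  realizable (B ++ flatten [seq dl z b | b <- xs]).
Proof.
elim: xs B => [|b xs IH] B HB He; first by rewrite /= cats0.
rewrite map_cons flatten_cons' catA; apply: IH.
- case/orP: (He b (mem_head _ _)) => H.
  + by apply: (splice (Q := [::])) H _.
  + apply: (splice (Q := [::]) HB H).
    exact: (permXY [::] [:: (z,b,z)] (b,z,b)).
- move=> q Hq.
  have /orP [H|H] : hasE B z q || hasE B q z by apply: He; rewrite in_cons Hq orbT.
  + by rewrite (hasE_cat _ H).
  + by rewrite (hasE_cat _ H) orbT.
Qed.

Lemma level_real z t d B : 2 <= z -> realizable B ->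
  (forall p, p \in take t (pairs z) -> hasE B p.2 p.1) ->
  (forall b, b < d -> tri b < t) -> d <= z ->
  realizable (B ++ Level z t d).
Proof.
move=> Hz HB He Ht Hd.
rewrite /Level catA; apply: real_LD; first exact: real_LT.
move=> b; rewrite mem_iota add0n => /andP [_ Hb].
have Htb := Ht b Hb.
case: (posnP b) => Hb0.
- rewrite Hb0; apply/orP; right.
  apply: hasE_catr; apply/hasP; exists (1, 0, z); last by rewrite /= !eqxx.
  apply/flattenP; exists (trip [:: 1; 0; z]); last by rewrite trip3 !inE eqxx !orbT.
  apply/mapP; exists (0, 1) => //.
  apply: pair0_in => //; by rewrite Hb0 in Htb.
- apply/orP; left.
  apply: hasE_catr; apply/hasP; exists (0, z, b); last by rewrite /= !eqxx.
  apply/flattenP; exists (trip [:: b; 0; z]); last by rewrite trip3 !inE eqxx !orbT.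
  apply/mapP; exists (0, b) => //.
  apply: pair0_in => //; lia.
Qed.

Lemma tri_le b c : b <= c -> tri b <= tri c.
Proof. move=> H; have := tri2 b; have := tri2 c; case: b H => [|b]; case: c => [|c] /=; nia. Qed.

Lemma tri_lt b z : b < z -> 1 < z -> tri b < tri z.
Proof. move=> H1 H2; have := tri2 b; have := tri2 z; case: b H1 => [|b]; case: z H2 => [|z] /=; nia. Qed.

Lemma size_flatten_const (A B : Type) (g : A -> seq B) c xs :
  (forall x, size (g x) = c) -> size (flatten (map g xs)) = c * size xs.
Proof. move=> H; elim: xs => [|x xs IH] /=; first by rewrite muln0. by rewrite size_cat IH H mulnS. Qed.

Lemma size_Level z t d : t <= tri z -> size (Level z t d) = 3 * t + 2 * d.
Proof.
move=> Ht; rewrite /Level size_cat /LT /LD.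
rewrite (@size_flatten_const _ _ (fun p : nat * nat => trip [:: p.2; p.1; z]) 3) //.
rewrite (@size_flatten_const _ _ (dl z) 2) // size_iota size_take size_pairs.
case: (ltngtP t (tri z)) => //; lia.
Qed.

Fixpoint F m : seq trp :=
  if m is m'.+1 then F m' ++ Level m'.+2 (tri m'.+2) m'.+2 else trip [:: 0; 1].

Lemma size_F m : size (F m) = m.+2 * tri m.+2.
Proof.
elim: m => //= m IH; rewrite size_cat IH size_Level //.
have := tri2 m.+2; have := tri2 m.+3 => /=; nia.
Qed.

Lemma F_good m : goodT m.+2 (F m).
Proof.
elim: m => [|m IH]; first by [].
rewrite /=; apply: level_good => //; lia.
Qed.

Lemma F_edges m a b : a != b -> a < m.+2 -> b < m.+2 -> hasE (F m) a b.
Proof.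
elim: m a b => [|m IH] a b Hab Ha Hb.
  have : ((a == 0) && (b == 1)) || ((a == 1) && (b == 0)) by lia.
  by case/orP => /andP [/eqP -> /eqP ->].
rewrite /=.
case: (ltnP a m.+2) => Ha'; case: (ltnP b m.+2) => Hb'.
- by apply: hasE_cat; apply: IH.
- have Eb : b = m.+2 by lia.
  apply: hasE_catr; apply/hasP; exists (m.+2, a, m.+2); last by rewrite /= Eb !eqxx.
  rewrite /Level mem_cat; apply/orP; right; apply/flattenP; exists (dl m.+2 a).
    by apply/mapP; exists a => //; rewrite mem_iota; lia.
  by rewrite !inE eqxx orbT.
- have Ea : a = m.+2 by lia.
  apply: hasE_catr; apply/hasP; exists (b, m.+2, b); last by rewrite /= Ea !eqxx.
  rewrite /Level mem_cat; apply/orP; right; apply/flattenP; exists (dl m.+2 b).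
    by apply/mapP; exists b => //; rewrite mem_iota; lia.
  by rewrite !inE eqxx.
- lia.
Qed.

Lemma F_real m : realizable (F m).
Proof.
elim: m => [|m IH]; first by exists [:: 0; 1].
change (realizable (F m ++ Level m.+2 (tri m.+2) m.+2)).
apply: level_real => //.
- move=> p /mem_take; rewrite mem_pairs => H.
  apply: F_edges; lia.
- by move=> b Hb; apply: tri_lt.
Qed.

Definition prv n i := if i == 0 then n.-1 else i.-1.
Definition nxt n i := if i.+1 == n then 0 else i.+1.

Lemma nth_tr d p s q i : i < size s ->
  nth d (tr p s q) i =
  (if i == 0 then p else nth 0 s i.-1, nth 0 s i, if i.+1 == size s then q else nth 0 s i.+1).
Proof.
elim: s p i => [|x s IH] p i //= Hi.
case: i Hi => [|i] Hi /=.
  by case: s {IH Hi}.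
rewrite IH //; case: i {Hi} => //.
Qed.

Lemma nth_trip d s i : i < size s ->
  nth d (trip s) i = (nth 0 s (prv (size s) i), nth 0 s i, nth 0 s (nxt (size s) i)).
Proof.
move=> Hi; rewrite /trip nth_tr // /prv /nxt.
by case: i Hi => [|i] Hi /=; rewrite ?nth_last; case: ifP => //; rewrite nth0.
Qed.

Lemma prv_lt n i : i < n -> prv n i < n.
Proof. rewrite /prv; case: i => [|i] /= H; [by case: n H | lia]. Qed.
Lemma nxt_lt n i : i < n -> nxt n i < n.
Proof. move=> H; rewrite /nxt; case: eqP => H'; lia. Qed.

Lemma modS_nxt n u : u < n -> u.+1 %% n = nxt n u.
Proof.
move=> H; rewrite /nxt; case: eqP => [->|Hn]; first by rewrite modnn.
by rewrite modn_small //; lia.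
Qed.

Lemma nxt_prv n u v : u < n -> v < n -> (u == nxt n v) = (v == prv n u).
Proof.
move=> Hu Hv; rewrite /nxt /prv.
case: ifP => /eqP ?; case: ifP => /eqP ?; lia.
Qed.

Lemma goodT_perm k T1 T2 : perm_eq T1 T2 -> goodT k T1 = goodT k T2.
Proof.
move=> H; rewrite /goodT (perm_uniq (perm_map st H)) (perm_all _ H).
congr [&& _, _ & _]; apply: eq_all => c.
by rewrite (perm_mem (perm_map mid H)).
Qed.

Lemma set2_minmax k (a b c d : nat) : a < k.+1 -> b < k.+1 -> c < k.+1 -> d < k.+1 ->
  [set (inord a : 'I_k.+1); inord b] = [set inord c; inord d] ->
  minn a b = minn c d /\ maxn a b = maxn c d.
Proof.
move=> Ha Hb Hc Hd E.
have Ma : inord a \in [set (inord c : 'I_k.+1); inord d] by rewrite -E !inE eqxx.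
have Mb : inord b \in [set (inord c : 'I_k.+1); inord d] by rewrite -E !inE eqxx orbT.
have Mc : inord c \in [set (inord a : 'I_k.+1); inord b] by rewrite E !inE eqxx.
have Md : inord d \in [set (inord a : 'I_k.+1); inord b] by rewrite E !inE eqxx orbT.
have inj : forall x y, x < k.+1 -> y < k.+1 -> ((inord x : 'I_k.+1) == inord y) = (x == y).
  move=> x y Hx Hy; apply/eqP/eqP => [H|->] //.
  by rewrite -(inordK Hx) -(inordK Hy) H.
rewrite !inE !inj // in Ma Mb Mc Md.
split; lia.
Qed.

Definition onx n (u : 'I_n) : 'I_n := Ordinal (nxt_lt (ltn_ord u)).
Definition opv n (u : 'I_n) : 'I_n := Ordinal (prv_lt (ltn_ord u)).

Lemma nbhd_cycle n (u : 'I_n) : nbhd (cycle_rel n) u = [set onx u; opv u].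
Proof.
apply/setP => j; rewrite /nbhd !inE /cycle_rel !modS_nxt //.
by rewrite (nxt_prv (ltn_ord u) (ltn_ord j)).
Qed.

Lemma trip_NLC k s : goodT k (trip s) -> 3 <= size s -> has_NLC (cycle_rel (size s)) k.
Proof.
move=> /and3P [Hu Hv Hc] Hn.
set n := size s.
have Hvi : forall i, i < n -> vtrip k (nth (0,0,0) (trip s) i).
  by move=> i Hi; apply: (allP Hv); rewrite mem_nth // size_trip.
case: k Hu Hv Hc Hvi => [|k] Hu Hv Hc Hvi.
  by have := Hvi 0 (ltn_trans _ Hn); rewrite nth_trip //; [rewrite /vtrip /=; lia| lia].
have Hs : forall i, i < n -> nth 0 s i < k.+1.
  by move=> i Hi; have := Hvi i Hi; rewrite nth_trip // /vtrip /=; lia.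
have inj : forall x y, x < k.+1 -> y < k.+1 -> ((inord x : 'I_k.+1) == inord y) = (x == y).
  move=> x y Hx Hy; apply/eqP/eqP => [H|->] //.
  by rewrite -(inordK Hx) -(inordK Hy) H.
exists (fun u : 'I_n => inord (nth 0 s u) : 'I_k.+1).
split; first split.
- move=> c.
  have : (c : nat) \in map mid (trip s) by apply: (allP Hc); rewrite mem_iota /=.
  case/mapP => t Ht Et.
  have := Ht; rewrite -index_mem => Hi.
  rewrite size_trip in Hi.
  exists (Ordinal Hi) => /=.
  apply: val_inj => /=; rewrite inordK ?Hs //.
  move: Et; rewrite -{1}(nth_index (0,0,0) Ht) nth_trip //.
- move=> u v; rewrite /cycle_rel modS_nxt // modS_nxt // => H E.
  move/eqP: E; rewrite inj ?Hs // => /eqP E.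
  case/orP: H => /eqP H.
  + have := Hvi u (ltn_ord u); rewrite nth_trip // /vtrip /= -H -E; lia.
  + have := Hvi v (ltn_ord v); rewrite nth_trip // /vtrip /=.
    by rewrite -H E; lia.
- move=> u v Huv E Es.
  apply: Huv; apply: val_inj.
  move: Es; rewrite !nbhd_cycle !imsetU1 !imset_set1 /= => Es.
  have Hu1 := Hs _ (nxt_lt (ltn_ord u)); have Hu2 := Hs _ (prv_lt (ltn_ord u)).
  have Hv1 := Hs _ (nxt_lt (ltn_ord v)); have Hv2 := Hs _ (prv_lt (ltn_ord v)).
  have [E1 E2] := set2_minmax Hu1 Hu2 Hv1 Hv2 Es.
  move/eqP: E; rewrite inj ?Hs // => /eqP E.
  have Hsz : size (map st (trip s)) = n by rewrite size_map size_trip.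
  have : nth (0,0,0) (map st (trip s)) u == nth (0,0,0) (map st (trip s)) v.
    rewrite !(nth_map (0,0,0)) ?size_trip // !nth_trip // /st /=.
    by rewrite E (minnC (nth 0 s (prv _ u))) (maxnC (nth 0 s (prv _ u))) E1 E2 minnC maxnC.
  by rewrite nth_uniq ?Hsz // => /eqP.
Qed.

Lemma real_NLC k T : realizable T -> goodT k T -> 3 <= size T -> has_NLC (cycle_rel (size T)) k.
Proof.
move=> [s [_ Hp]] Hg Hn.
have -> : size T = size s by rewrite -(perm_size Hp) size_trip.
apply: trip_NLC; last by rewrite -(perm_size Hp) size_trip in Hn.
by rewrite (goodT_perm k Hp).
Qed.

Lemma consA z t d : 2 <= z -> t <= tri z -> d <= z -> 0 < t + d ->
  (forall b, b < d -> tri b < t) -> 3 <= z * tri z + 3 * t + 2 * d ->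
  has_NLC (cycle_rel (z * tri z + 3 * t + 2 * d)) z.+1.
Proof.
move=> Hz Ht Hd Htd Hb Hn.
have [m Em] : exists m, z = m.+2 by exists z.-2; lia.
subst z.
have -> : m.+2 * tri m.+2 + 3 * t + 2 * d = size (F m ++ Level m.+2 t d).
  by rewrite size_cat size_F size_Level // addnA.
apply: real_NLC.
- apply: level_real => //; first exact: F_real.
  move=> p /mem_take; rewrite mem_pairs => H; apply: F_edges; lia.
- by apply: level_good => //; apply: F_good.
- by rewrite size_cat size_F size_Level // addnA.
Qed.

Lemma take_pairs_small z t p : 3 <= z -> t <= 3 -> p \in take t (pairs z) -> p.1 < p.2 < 3.
Proof.
move=> Hz Ht Hp.
have [r Hr] := pairs_prefix Hz.
rewrite Hr take_cat size_pairs /= in Hp.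
have : p \in pairs 3.
  move: Hp; case: ifP => _; first by move/mem_take.
  have -> : t - 3 = 0 by lia.
  by rewrite take0.
by rewrite mem_pairs.
Qed.

Lemma consB z r t : 3 <= z -> r <= 2 -> 0 < t <= 2 ->
  has_NLC (cycle_rel (z * tri z + 3 * tri z + 2 * (z - r) + 3 * t)) z.+2.
Proof.
move=> Hz Hr Ht.
have [m Em] : exists m, z = m.+2 by exists z.-2; lia.
subst z.
set B := F m ++ Level m.+2 (tri m.+2) (m.+2 - r).
have -> : m.+2 * tri m.+2 + 3 * tri m.+2 + 2 * (m.+2 - r) + 3 * t = size (B ++ Level m.+3 t 0).
  rewrite size_cat /B size_cat size_F !size_Level //; first by lia.
  by apply: (leq_trans (n := 3)); [lia | apply: (tri_le (b := 3)); lia].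
have HB : realizable B.
  apply: level_real => //; first exact: F_real.
  - move=> p /mem_take; rewrite mem_pairs => H; apply: F_edges; lia.
  - move=> b Hb; apply: tri_lt; lia.
  - lia.
apply: real_NLC.
- apply: level_real => //.
  move=> p Hp; have := take_pairs_small (z := m.+3) _ _ Hp.
  move=> H; rewrite /B; apply: hasE_cat; apply: F_edges; lia.
- apply: level_good => //.
  + by apply: level_good => //; [apply: F_good | lia | lia ].
  + by apply: (leq_trans (n := 3)); [lia | apply: (tri_le (b := 3)); lia].
  + lia.
- rewrite size_cat /B size_cat size_F !size_Level //; first by lia.
  by apply: (leq_trans (n := 3)); [lia | apply: (tri_le (b := 3)); lia].
Qed.

Lemma small10 : has_NLC (cycle_rel 10) 4.
Proof. exact: (@trip_NLC 4 [:: 0; 1; 0; 1; 2; 0; 1; 3; 0; 3]). Qed.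
Lemma small11 : has_NLC (cycle_rel 11) 4.
Proof. exact: (@trip_NLC 4 [:: 0; 1; 0; 1; 2; 0; 1; 3; 0; 2; 3]). Qed.
Lemma small13 : has_NLC (cycle_rel 13) 4.
Proof. exact: (@trip_NLC 4 [:: 0; 1; 0; 1; 2; 0; 1; 3; 0; 2; 0; 2; 3]). Qed.

Lemma choose_td z x : 2 <= z -> 3 <= x -> x != 4 -> x <= 3 * tri z + 2 * z ->
  x != 3 * tri z + 2 * z - 1 ->
  exists t d, [/\ x = 3 * t + 2 * d, t <= tri z, d <= z, 0 < t + d &
                 forall b, b < d -> tri b < t].
Proof.
move=> Hz Hx3 Hx4 HxX HxX1.
have [z' Ez] : exists z', z = z'.+1 by exists z.-1; lia.
subst z.
have Etri : tri z'.+1 = tri z' + z' by [].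
case: (leqP x (3 * tri z'.+1 + 2)) => Hreg.
- have Ex := divn_eq x 3; have Hr := ltn_pmod x (isT : 0 < 3).
  set q := x %/ 3 in Ex; set r := x %% 3 in Ex Hr.
  have : r = 0 \/ r = 1 \/ r = 2 by lia.
  case => [Er|[Er|Er]].
  + exists q, 0; split => //; lia.
  + exists q.-1, 2; split; try lia.
    move=> b Hb; have -> : tri b = 0 by case: b Hb => [|[|]].
    lia.
  + exists q, 1; split; try lia.
    move=> b Hb; have -> : b = 0 by lia.
    rewrite /=; lia.
- set y := x - 3 * tri z'.+1.
  have Eyx : y = x - 3 * tri z'.+1 by [].
  clearbody y.
  have Ey := divn_eq y 2; have Hr := ltn_pmod y (isT : 0 < 2).
  set q := y %/ 2 in Ey; set r := y %% 2 in Ey Hr.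
  have : r = 0 \/ r = 1 by lia.
  case => Er.
  + exists (tri z'.+1), q; split; try lia.
    move=> b Hb; apply: tri_lt; lia.
  + exists (tri z'.+1).-1, q.+2; split; try lia.
    move=> b Hb.
    have Hz3 : 2 <= z' by lia.
    have := tri_le (b := b) (c := z') ltac:(lia).
    lia.
Qed.

Definition pm (t : trp) := (t.1.1, t.1.2).
Definition mn (t : trp) := (t.1.2, t.2).

Lemma mn_pm x s q : (x, head q s) :: map mn (tr x s q) = rcons (map pm (tr x s q)) (last x s, q).
Proof. by elim: s x => [|y s IH] x //=; rewrite -IH. Qed.

Lemma mn_rot s : map mn (trip s) = rot 1 (map pm (trip s)).
Proof.
case: s => [|x s] //.
by rewrite /trip /= rot1_cons -mn_pm.
Qed.

Lemma count_mn_pm (P : pred (nat * nat)) s :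
  count (fun t => P (mn t)) (trip s) = count (fun t => P (pm t)) (trip s).
Proof.
rewrite -(count_map mn P) -(count_map pm P) mn_rot.
by apply/permP; rewrite perm_rot.
Qed.

Definition vst k (s : trp) :=
  [&& s.1.2 <= s.2, s.1.2 != s.1.1, s.2 != s.1.1, s.1.1 < k & s.2 < k].

Lemma vst_st k t : vtrip k t -> vst k (st t).
Proof. case: t => [[p x] q]; rewrite /vtrip /vst /st /=; lia. Qed.

Definition phi (s : trp) : trp :=
  (s.1.1, s.1.2 - (s.1.1 < s.1.2), (s.2 - (s.1.1 < s.2)).+1).
Definition psi (s : trp) : trp :=
  (s.1.1, s.1.2 + (s.1.1 <= s.1.2), s.2.-1 + (s.1.1 <= s.2.-1)).

Definition S k := [seq (x, p.1, p.2) | x <- iota 0 k, p <- pairs k].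

Lemma size_S k : size (S k) = k * tri k.
Proof. by rewrite /S size_allpairs size_iota size_pairs. Qed.

Lemma mem_S k s : (s \in S k) = (s.1.1 < k) && (s.1.2 < s.2 < k).
Proof.
case: s => [[x a] c] /=.
apply/allpairsP/idP => [[[y [a' c']] /= [Hy Hp [-> -> ->]]]|H].
  by rewrite mem_iota in Hy; rewrite mem_pairs /= in Hp; lia.
by exists (x, (a, c)); split => //=; [rewrite mem_iota | rewrite mem_pairs /=]; lia.
Qed.

Lemma uniq_S k : uniq (S k).
Proof.
apply: allpairs_uniq; rewrite ?iota_uniq ?uniq_pairs //.
by move=> [x1 [a1 c1]] [x2 [a2 c2]] _ _ [-> -> ->].
Qed.

Lemma phi_S k s : vst k s -> phi s \in S k.
Proof. case: s => [[x a] c]; rewrite /vst mem_S /phi /=; case: ltnP => ?; case: ltnP => ?; lia. Qed.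

Lemma phi_inj k s1 s2 : vst k s1 -> vst k s2 -> phi s1 = phi s2 -> s1 = s2.
Proof.
move: s1 s2 => [[x a] c] [[x' a'] c']; rewrite /vst /phi /= => H1 H2 [E1 E2 E3].
subst x'; move: E2 E3; do 4 (case: ltnP => ?); move=> *; apply/eqP; rewrite !xpair_eqE; lia.
Qed.

Lemma psi_vst k s : s \in S k -> vst k (psi s).
Proof. case: s => [[x a] c]; rewrite mem_S /vst /psi /=; case: leqP => ?; case: leqP => ?; lia. Qed.

Lemma phi_psi k s : s \in S k -> phi (psi s) = s.
Proof.
case: s => [[x a] c]; rewrite mem_S /phi /psi /= => H.
apply/eqP; rewrite !xpair_eqE; do 4 (case: leqP => ?); rewrite /=; try lia.
Qed.

Lemma count_bound k L : uniq L -> all (vst k) L -> size L <= k * tri k.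
Proof.
move=> Hu Hv; rewrite -size_S -(size_map phi).
apply: uniq_leq_size.
- rewrite map_inj_in_uniq // => x y Hx Hy; apply: phi_inj; exact: (allP Hv).
- by move=> x /mapP [y Hy ->]; apply: phi_S; exact: (allP Hv).
Qed.

Lemma missing_exists k L : uniq L -> all (vst k) L -> size L < k * tri k ->
  exists s, vst k s /\ s \notin L.
Proof.
move=> Hu Hv Hs.
case Hh: (has (fun t => psi t \notin L) (S k)).
  case/hasP: Hh => t Ht Hn; exists (psi t); split => //; exact: psi_vst Ht.
exfalso; move/negbT: Hh; rewrite -all_predC => /allP Ha.
have : size (S k) <= size (map phi L).
  apply: uniq_leq_size; first exact: uniq_S.
  move=> t Ht; have := Ha t Ht; rewrite /= negbK => HL.
  by rewrite -(phi_psi Ht); apply: map_f.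
by rewrite size_map size_S leqNgt Hs.
Qed.

Lemma missing_unique k L : uniq L -> all (vst k) L -> size L = (k * tri k).-1 ->
  forall s1 s2, vst k s1 -> vst k s2 -> s1 \notin L -> s2 \notin L -> s1 = s2.
Proof.
move=> Hu Hv Hs s1 s2 H1 H2 N1 N2.
apply/eqP; apply/negPn/negP => Hne.
have := count_bound (L := s1 :: s2 :: L) (k := k).
rewrite /= inE negb_or Hne N1 N2 Hu H1 H2 Hv /= Hs; lia.
Qed.

Definition A1 k b a : seq trp := [seq (b, a, q) | q <- [seq q <- iota a (k - a) | q != b]].
Definition A2 b a : seq trp := [seq (b, p, a) | p <- [seq p <- iota 0 a.+1 | p != b]].
Definition Q1 b a (s : trp) := (s.1.1 == b) && (s.1.2 == a).
Definition Q2 b a (s : trp) := (s.1.1 == b) && (s.2 == a).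

Lemma count_neq m l b : count (fun q => q != b) (iota m l) = l - ((m <= b) && (b < m + l)).
Proof.
have := count_predC (pred1 b) (iota m l).
rewrite size_iota (count_uniq_mem _ (iota_uniq m l)) mem_iota.
have -> : count (predC (pred1 b)) (iota m l) = count (fun q => q != b) (iota m l) by [].
lia.
Qed.

Lemma A_sizes k a b : a < k -> b < k -> a != b -> size (A1 k b a) + size (A2 b a) = k.
Proof.
move=> Ha Hb Hab; rewrite /A1 /A2 !size_map !size_filter !count_neq; lia.
Qed.

Lemma uniq_A1 k b a : uniq (A1 k b a).
Proof.
rewrite /A1 map_inj_uniq ?filter_uniq ?iota_uniq // => x y /(congr1 snd) /= -> //.
Qed.
Lemma uniq_A2 b a : uniq (A2 b a).
Proof.
rewrite /A2 map_inj_uniq ?filter_uniq ?iota_uniq // => x y /(congr1 (fun t => t.1.2)) /= -> //.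
Qed.

Lemma memA1 k b a s : (s \in A1 k b a) = [&& s.1.1 == b, s.1.2 == a, a <= s.2, s.2 < k & s.2 != b].
Proof.
case: s => [[x y] q] /=; apply/mapP/idP => [[q' Hq' [-> -> ->]]|H].
  by move: Hq'; rewrite mem_filter mem_iota => /andP [H1 H2]; rewrite !eqxx /=; lia.
exists q; first by rewrite mem_filter mem_iota; lia.
apply/eqP; rewrite !xpair_eqE; lia.
Qed.

Lemma memA2 b a s : (s \in A2 b a) = [&& s.1.1 == b, s.2 == a, s.1.2 <= a & s.1.2 != b].
Proof.
case: s => [[x p] y] /=; apply/mapP/idP => [[p' Hp' [-> -> ->]]|H].
  by move: Hp'; rewrite mem_filter mem_iota => /andP [H1 H2]; rewrite !eqxx /=; lia.
exists p; first by rewrite mem_filter mem_iota; lia.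
apply/eqP; rewrite !xpair_eqE; lia.
Qed.

Lemma E_st b a T :
  count (Q1 b a) (map st T) + count (Q2 b a) (map st T) =
  count (fun t : trp => (t.1.2 == b) && (t.1.1 == a)) T + count (fun t : trp => (t.1.2 == b) && (t.2 == a)) T.
Proof.
elim: T => [|[[p x] q] T IH] //=.
rewrite /Q1 /Q2 /st /= in IH *.
have : ((x == b) && (minn p q == a)) + ((x == b) && (maxn p q == a)) =
       ((x == b) && (p == a)) + ((x == b) && (q == a)).
  case: (x == b) => //=; lia.
lia.
Qed.

Lemma E_sym b a s :
  count (Q1 b a) (map st (trip s)) + count (Q2 b a) (map st (trip s)) =
  count (Q1 a b) (map st (trip s)) + count (Q2 a b) (map st (trip s)).
Proof.
rewrite !E_st.
have H1 := count_mn_pm (fun e => (e.1 == b) && (e.2 == a)) s.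
have H2 := count_mn_pm (fun e => (e.1 == a) && (e.2 == b)) s.
rewrite /mn /pm /= in H1 H2.
rewrite H1 H2 addnC; congr (_ + _); by apply: eq_count => t; rewrite andbC.
Qed.

Lemma no_almost k s : uniq (map st (trip s)) -> all (vtrip k) (trip s) ->
  size s = (k * tri k).-1 -> 0 < k * tri k -> False.
Proof.
move=> Hu Hv Hs Hk.
set L := map st (trip s).
have HvL : all (vst k) L by rewrite all_map; apply: sub_all Hv => t; apply: vst_st.
have HsL : size L = (k * tri k).-1 by rewrite size_map size_trip.
have [s0 [Hv0 Hn0]] := missing_exists Hu HvL ltac:(rewrite HsL; lia).
have Hun := missing_unique Hu HvL HsL.
move: s0 Hv0 Hn0 Hun => [[b a] q] Hv0 Hn0 Hun.
have Hvs := Hv0; rewrite /vst /= in Hvs.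
have up1 : count (Q1 b a) L + 1 <= size (A1 k b a).
  rewrite -size_filter addn1.
  apply: (uniq_leq_size (s1 := (b, a, q) :: filter (Q1 b a) L)).
    by rewrite /= filter_uniq // mem_filter (negbTE Hn0) andbF.
  move=> t; rewrite inE => /orP [/eqP ->|].
    rewrite memA1 /=; lia.
  rewrite mem_filter => /andP [HQ Ht]; have := allP HvL t Ht.
  move: HQ; case: t {Ht} => [[x y] z]; rewrite /Q1 /vst memA1 /=; lia.
have up2 : count (Q2 b a) L <= size (A2 b a).
  rewrite -size_filter; apply: uniq_leq_size; first by rewrite filter_uniq.
  move=> t; rewrite mem_filter => /andP [HQ Ht]; have := allP HvL t Ht.
  move: HQ; case: t {Ht} => [[x y] z]; rewrite /Q2 /vst memA2 /=; lia.
have inL : forall t, vst k t -> t.1.1 = a -> t \in L.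
  move=> t Ht Ea; apply/negPn/negP => Hn.
  have := Hun t (b, a, q) Ht Hv0 Hn Hn0; case: t Ht Ea {Hn} => [[x y] z] /= _ -> [E _ _]; lia.
have lo1 : size (A1 k a b) <= count (Q1 a b) L.
  rewrite -size_filter; apply: uniq_leq_size; first exact: uniq_A1.
  move=> t Ht; rewrite mem_filter; move: Ht.
  case: t => [[x y] z]; rewrite memA1 /= => H.
  have Hx : x = a by lia.
  rewrite /Q1 /= inL /=; [lia | rewrite /vst /=; lia | done].
have lo2 : size (A2 a b) <= count (Q2 a b) L.
  rewrite -size_filter; apply: uniq_leq_size; first exact: uniq_A2.
  move=> t Ht; rewrite mem_filter; move: Ht.
  case: t => [[x y] z]; rewrite memA2 /= => H.
  have Hx : x = a by lia.
  rewrite /Q2 /= inL /=; [lia | rewrite /vst /=; lia | done].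
have E := E_sym b a s.
have S1 := A_sizes (a := a) (b := b) (k := k) ltac:(lia) ltac:(lia) ltac:(lia).
have S2 := A_sizes (a := b) (b := a) (k := k) ltac:(lia) ltac:(lia) ltac:(lia).
rewrite -/L in E.
lia.
Qed.

Lemma set2_eq k (a b c d : 'I_k) :
  minn a b = minn c d -> maxn a b = maxn c d -> [set a; b] = [set c; d].
Proof.
move=> E1 E2.
have : (((a : nat) == c) && ((b : nat) == d)) || (((a : nat) == d) && ((b : nat) == c)) by lia.
case/orP => /andP [/eqP H1 /eqP H2].
- by rewrite (val_inj H1) (val_inj H2).
- by rewrite (val_inj H1) (val_inj H2) setUC.
Qed.

Lemma NLC_list n k (f : 'I_n -> 'I_k) : 3 <= n -> neighbor_locating (cycle_rel n) f ->
  exists s, [/\ size s = n, uniq (map st (trip s)) & all (vtrip k) (trip s)].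
Proof.
move=> Hn [[Hon Hpr] Hnl].
set s := [seq val (f i) | i <- enum 'I_n].
have Hsz : size s = n by rewrite size_map size_enum_ord.
have Hs : forall u : 'I_n, nth 0 s u = f u.
  by move=> u; rewrite (nth_map u) ?size_enum_ord // nth_ord_enum.
have Ht : forall u : 'I_n, nth (0,0,0) (trip s) u = ((f (opv u) : nat), (f u : nat), (f (onx u) : nat)).
  by move=> u; rewrite nth_trip Hsz // -!Hs.
have Hadj : forall u : 'I_n, cycle_rel n u (onx u) /\ cycle_rel n u (opv u).
  move=> u; have : onx u \in nbhd (cycle_rel n) u by rewrite nbhd_cycle !inE eqxx.
  have : opv u \in nbhd (cycle_rel n) u by rewrite nbhd_cycle !inE eqxx orbT.
  by rewrite !inE => -> ->.
exists s; split => //.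
- apply/(uniqP (0,0,0)) => i j; rewrite !inE size_map size_trip Hsz => Hi Hj.
  rewrite !(nth_map (0,0,0)) ?size_trip ?Hsz //.
  have := Ht (Ordinal Hi); have := Ht (Ordinal Hj); rewrite /= => -> -> [E0 E1 E2].
  have Ef : f (Ordinal Hi) = f (Ordinal Hj) by apply: val_inj.
  have Ei : Ordinal Hi = Ordinal Hj.
    apply/eqP; apply/negPn/negP => /eqP Hne.
    apply: (Hnl _ _ Hne Ef).
    rewrite !nbhd_cycle !imsetU1 !imset_set1.
    by apply: set2_eq; rewrite [LHS]minnC [RHS]minnC || rewrite [LHS]maxnC [RHS]maxnC.
  by move: (congr1 val Ei).
- apply/(all_nthP (0,0,0)) => i; rewrite size_trip Hsz => Hi.
  rewrite (Ht (Ordinal Hi)) /vtrip /= !ltn_ord !andbT.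
  have [H1 H2] := Hadj (Ordinal Hi).
  have N1 := Hpr _ _ H1; have N2 := Hpr _ _ H2.
  apply/andP; split; apply/negP => /eqP E.
  + by apply: N2; apply: val_inj.
  + by apply: N1; apply: val_inj.
Qed.

Lemma M2 k : k ^ 3 - k ^ 2 = 2 * (k * tri k).
Proof. have := tri2 k; case: k => [|k] //= H; rewrite !expnS expn0; nia. Qed.

Lemma M_succ z : z.+1 * tri z.+1 = z * tri z + 3 * tri z + 2 * z.
Proof. have := tri2 z; rewrite /=; case: z => [|z] //= H; nia. Qed.

Lemma NLC_lower n k : 3 <= n -> has_NLC (cycle_rel n) k -> n <= k * tri k.
Proof.
move=> Hn [f Hf]; have [s [Hsz Hu Hv]] := NLC_list Hn Hf.
rewrite -Hsz -size_trip -(size_map st); apply: count_bound Hu _.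
by rewrite all_map; apply: sub_all Hv => t; apply: vst_st.
Qed.

Lemma NLC_almost n k : 3 <= n -> has_NLC (cycle_rel n) k -> n = (k * tri k).-1 -> False.
Proof.
move=> Hn [f Hf] E; have [s [Hsz Hu Hv]] := NLC_list Hn Hf.
apply: (no_almost Hu Hv); lia.
Qed.

Unset Implicit Arguments.

Theorem theorem3 (n n0 : nat) :
  9 <= n ->
  2 * n <= n0 ^ 3 - n0 ^ 2 ->
  (forall k, 2 * n <= k ^ 3 - k ^ 2 -> n0 <= k) ->
  is_chiL2 (cycle_rel n)
    (if 2 * n.+1 == n0 ^ 3 - n0 ^ 2 then n0.+1 else n0).
Proof.
rewrite !M2 => Hn Hup Hmin.
have Hmin' : forall k, n <= k * tri k -> n0 <= k by move=> k Hk; apply: Hmin; rewrite M2; lia.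
have Hup' : n <= n0 * tri n0 by lia.
have Hn3 : 3 <= n by lia.
have Hlow : forall k, has_NLC (cycle_rel n) k -> n0 <= k.
  by move=> k Hk; apply: Hmin'; apply: NLC_lower.
have Hn0 : 3 <= n0.
  case: n0 Hup' {Hmin Hmin' Hup Hlow} => [|[|[|]]] //=; lia.
have [z Ez] : exists z, n0 = z.+1 by exists n0.-1; lia.
subst n0.
have Hz : 2 <= z by lia.
have HMs := M_succ z.
have Hlz : z * tri z < n.
  rewrite ltnNge; apply/negP => H; have := Hmin' _ H; lia.
have Etri3 : tri 3 = 3 by [].
case: eqP => Hsp.
-
  have En : n = (z.+1 * tri z.+1).-1 by lia.
  split.
  + have Hz3 : 3 <= z.
      rewrite ltnNge; apply/negP => H.
      have Ez2 : z = 2 by lia.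
      rewrite Ez2 /= in En; lia.
    have -> : n = z * tri z + 3 * tri z + 2 * (z - 2) + 3 * 1 by lia.
    by apply: consB.
  + move=> k' Hk'; have := Hlow _ Hk'.
    rewrite leq_eqVlt => /orP [/eqP Ek|] //.
    exfalso; apply: (NLC_almost Hn3 Hk'); by rewrite -Ek.
- split; last by move=> k' Hk'; apply: Hlow.
  set x := n - z * tri z.
  have Ex : n = z * tri z + x by rewrite /x; lia.
  have HxX : x <= 3 * tri z + 2 * z by lia.
  have HxX1 : x != 3 * tri z + 2 * z - 1 by apply/eqP => E; apply: Hsp; lia.
  have Hx1 : 1 <= x by lia.
  case: (boolP ((x == 1) || (x == 2) || (x == 4))) => Hsmall.
  + case: (ltnP z 4) => Hz4.
    * have Ez3 : z = 3.
        case: (z =P 2) => Hz2; last by lia.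
        rewrite Hz2 /= in Ex; exfalso.
        by case/orP: Hsmall => [/orP [] |] /eqP Hx; lia.
      subst z.
      have E9 : 3 * tri 3 = 9 by [].
      rewrite Ex E9.
      case/orP: Hsmall => [/orP [] |] /eqP ->.
      -- exact: small10.
      -- exact: small11.
      -- exact: small13.
    * have [z' Ez'] : exists z', z = z'.+1 by exists z.-1; lia.
      subst z.
      have HMs' := M_succ z'.
      case/orP: Hsmall => [/orP [] |] /eqP Ex'.
      -- have -> : n = z' * tri z' + 3 * tri z' + 2 * (z' - 1) + 3 * 1 by lia.
         by apply: consB => //; lia.
      -- have -> : n = z' * tri z' + 3 * tri z' + 2 * (z' - 2) + 3 * 2 by lia.
         by apply: consB => //; lia.
      -- have -> : n = z' * tri z' + 3 * tri z' + 2 * (z' - 1) + 3 * 2 by lia.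
         by apply: consB => //; lia.
  + have Hx3 : 3 <= x by lia.
    have Hx4 : x != 4 by lia.
    have [t [d [Etd Ht Hd Htd Hb]]] := choose_td Hz Hx3 Hx4 HxX HxX1.
    rewrite Ex Etd addnA.
    apply: consA => //; lia.
Qed.
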